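(* Let $k\in\{1,\dots,r\}$ and suppose $(\bm n;\bm m),(\bm n+\bm e_k;\bm m),(\bm n;\bm m+\bm e_k)\in\mathfrak C_{2r}$ are normal. Then $$\frac{L_k[\Phi_{\bm n;\bm m+\bm e_k}(w)w^{-n_k}]}{L_k[\Phi_{\bm n;\bm m}(w)w^{-n_k}]}=\frac{L_k[\Phi^*_{\bm n+\bm e_k;\bm m}(w)w^{m_k}]}{L_k[\Phi^*_{\bm n;\bm m}(w)w^{m_k}]}=1-\alpha_{\bm n;\bm m+\bm e_k}\beta_{\bm n+\bm e_k;\bm m}.$$ Furthermore, $\alpha_{\bm n;\bm m+\bm e_k}\beta_{\bm n+\bm e_k;\bm m}\ne1$ if and only if $(\bm n+\bm e_k;\bm m+\bm e_k)$ is normal.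
   Context: Fix $r\ge1$; $\bm e_j$ is the $j$-th standard unit vector of $\mathbb Z^r$; for $\bm v\in\mathbb Z^r$, $|\bm v|=v_1+\dots+v_r$ (signed). Let $c_{k,j}\in\mathbb C$ and $L_j$ the linear functional on complex Laurent polynomials with $L_j[w^{-k}]=c_{k,j}$ ($k\in\mathbb Z$, $1\le j\le r$). $\mathfrak C_{2r}=\{(\bm n;\bm m)\in\mathbb Z^r\times\mathbb Z^r:n_j+m_j\ge0\ \forall j\}$. For $(\bm n;\bm m)\in\mathfrak C_{2r}$, $\bm n\ne-\bm m$, $T_{\bm n;\bm m}$ is the square matrix of size $|\bm n|+|\bm m|$ with rows indexed by $(j,k)$, $1\le j\le r$, $-m_j\le k\le n_j-1$ (ordered by $j$, then increasing $k$), columns indexed by $i=-|\bm m|,\dots,|\bm n|-1$, entries $c_{k-i,j}$; $T_{\bm n;-\bm n}:=1$; normal means $\det T_{\bm n;\bm m}\ne0$. For normal $(\bm n;\bm m)$, $\bm n\ne-\bm m$: $\Phi_{\bm n;\bm m}$ is the unique Laurent polynomial in $\operatorname{span}\{z^k\}_{k=-|\bm m|}^{|\bm n|}$ with $z^{|\bm n|}$-coefficient $1$ and $L_j[\Phi_{\bm n;\bm m}(w)w^{-k}]=0$ for $-m_j\le k\le n_j-1$, all $j$; $\Phi^*_{\bm n;\bm m}$ is the unique one in that span with $z^{-|\bm m|}$-coefficient $1$ and $L_j[\Phi^*_{\bm n;\bm m}(w)w^{-k}]=0$ for $-m_j+1\le k\le n_j$; for $\bm n=-\bm m$, $\Phi=\Phi^*=1$.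 $\alpha_{\bm n;\bm m}$ := $z^{-|\bm m|}$-coefficient of $\Phi_{\bm n;\bm m}$; $\beta_{\bm n;\bm m}$ := $z^{|\bm n|}$-coefficient of $\Phi^*_{\bm n;\bm m}$. *)

(* Defs.v *)
From HB Require Import structures.
From mathcomp Require Import all_boot all_order all_algebra.
From mathcomp Require Import reals complex.
From Stdlib Require Import ClassicalEpsilon.
Set Implicit Arguments. Unset Strict Implicit. Unset Printing Implicit Defensive.
Import Order.TTheory GRing.Theory Num.Theory.
Local Open Scope ring_scope.

Section MOP.
Variables (F : fieldType) (r : nat).
(* c k j = c_{k,j} = L_j[w^{-k}] *)
Variable c : int -> 'I_r -> F.

Definition vabs (v : 'I_r -> int) : int := \sum_(j < r) v j.
Definition vshift (v : 'I_r -> int) (k : 'I_r) : 'I_r -> int :=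
  fun j => v j + (j == k)%:Z.
Definition inC2r (n m : 'I_r -> int) : Prop := forall j, 0 <= n j + m j.
Definition diag_idx (n m : 'I_r -> int) : bool := [forall j, n j + m j == 0].

(* number of rows of block j : n_j + m_j *)
Definition dsz (n m : 'I_r -> int) (j : 'I_r) : nat := absz (n j + m j).
Definition Tsize (n m : 'I_r -> int) : nat := (\sum_(j < r) dsz n m j)%N.
Definition Sbefore (n m : 'I_r -> int) (j : 'I_r) : nat :=
  (\sum_(l < r | (l < j)%N) dsz n m l)%N.

(* T_{n;m}: row t corresponds to (j, k) with k = -m_j + (t - Sbefore j),
   column col corresponds to i = -|m| + col; entry c_{k-i,j}. *)
Definition Tmat (n m : 'I_r -> int) : 'M[F]_(Tsize n m) :=
  \matrix_(t, col)
    \sum_(j < r | (Sbefore n m j <= t < Sbefore n m j + dsz n m j)%N)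
       c ((- m j + (t - Sbefore n m j)%N%:Z) - (- vabs m + col%:Z)) j.

Definition normal (n m : 'I_r -> int) : bool :=
  if diag_idx n m then true (* T_{n;-n} := 1 *) else \det (Tmat n m) != 0.

(* Laurent polynomials are represented by their coefficient functions
   int -> F.  P is in span{z^i}_{lo <= i <= hi}: *)
Definition supp_in (lo hi : int) (P : int -> F) : Prop :=
  forall i, (i < lo) || (hi < i) -> P i = 0.
(* For P supported in [lo,hi]:  Lw j lo hi P s = L_j[P(w) w^{-s}]
   = sum_i P_i L_j[w^{i-s}] = sum_i P_i c_{s-i,j}. *)
Definition Lw (j : 'I_r) (lo hi : int) (P : int -> F) (s : int) : F :=
  \sum_(t < (absz (hi - lo)).+1) P (lo + t%:Z) * c (s - (lo + t%:Z)) j.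

Definition is_Phi (n m : 'I_r -> int) (P : int -> F) : Prop :=
  [/\ supp_in (- vabs m) (vabs n) P, P (vabs n) = 1 &
      forall j (k : int), - m j <= k <= n j - 1 ->
        Lw j (- vabs m) (vabs n) P k = 0].
Definition is_Phistar (n m : 'I_r -> int) (P : int -> F) : Prop :=
  [/\ supp_in (- vabs m) (vabs n) P, P (- vabs m) = 1 &
      forall j (k : int), - m j + 1 <= k <= n j ->
        Lw j (- vabs m) (vabs n) P k = 0].

Definition monom (a : int) : int -> F := fun i => (i == a)%:R.
Definition zero_fun : int -> F := fun _ => 0.

Definition Phi (n m : 'I_r -> int) : int -> F :=
  if diag_idx n m then monom (vabs n)
  else epsilon (inhabits zero_fun) (is_Phi n m).
Definition Phistar (n m : 'I_r -> int) : int -> F :=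
  if diag_idx n m then monom (vabs n)
  else epsilon (inhabits zero_fun) (is_Phistar n m).

Definition alpha (n m : 'I_r -> int) : F := Phi n m (- vabs m).
Definition beta (n m : 'I_r -> int) : F := Phistar n m (vabs n).

End MOP.

(* Main.v *)
Require Import Defs.
From HB Require Import structures.
From mathcomp Require Import all_boot all_order all_algebra.
From mathcomp Require Import reals complex.
From mathcomp Require Import zify ring.
From Stdlib Require Import ClassicalEpsilon.
Import Order.TTheory GRing.Theory Num.Theory.
Local Open Scope ring_scope.

Section Helpers.
Variables (F : fieldType) (r : nat) (c : int -> 'I_r -> F).

Lemma Lw_eqf (j : 'I_r) (lo hi : int) (P : int -> F) Q (s : int) : (forall i, P i = Q i) ->
  Lw c j lo hi P s = Lw c j lo hi Q s.
Proof. by move=> PQ; rewrite /Lw; apply: eq_bigr => t _; rewrite PQ. Qed.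

Lemma Lw_comb3 (j : 'I_r) (lo hi : int) (P : int -> F) Q R a b e (s : int) :
  Lw c j lo hi (fun i => a * P i + b * Q i + e * R i) s =
  a * Lw c j lo hi P s + b * Lw c j lo hi Q s + e * Lw c j lo hi R s.
Proof.
rewrite /Lw !mulr_sumr -!big_split /=; apply: eq_bigr => t _; ring.
Qed.

Lemma Lw_shift (j : 'I_r) (lo hi : int) (P : int -> F) (s : int) :
  Lw c j lo hi (fun i => P (i + 1)) s = Lw c j (lo + 1) (hi + 1) P (s + 1).
Proof.
rewrite /Lw (_ : hi + 1 - (lo + 1) = hi - lo); last by ring.
apply: eq_bigr => t _; congr (P _ * c _ j); ring.
Qed.

Lemma Lw_step_r (j : 'I_r) (lo hi : int) (P : int -> F) (s : int) : lo <= hi -> P (hi + 1) = 0 ->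
  Lw c j lo (hi + 1) P s = Lw c j lo hi P s.
Proof.
move=> h h0; rewrite /Lw (_ : absz (hi + 1 - lo)%R = (absz (hi - lo)%R).+1); last by lia.
rewrite big_ord_recr /=.
have -> : lo + (absz (hi - lo)%R).+1%:Z = hi + 1 by lia.
by rewrite h0 mul0r addr0.
Qed.

Lemma Lw_step_l (j : 'I_r) (lo hi : int) (P : int -> F) (s : int) : lo <= hi -> P (lo - 1) = 0 ->
  Lw c j (lo - 1) hi P s = Lw c j lo hi P s.
Proof.
move=> h h0; rewrite /Lw (_ : absz (hi - (lo - 1))%R = (absz (hi - lo)%R).+1); last by lia.
rewrite big_ord_recl /= addr0 h0 mul0r add0r.
apply: eq_bigr => t _; idtac.
by have -> : lo - 1 + (t.+1)%:Z = lo + t%:Z by lia.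
Qed.

Lemma Lw_ext (j : 'I_r) (lo hi lo' hi' : int) (P : int -> F) (s : int) : supp_in lo hi P -> lo' <= lo -> lo <= hi ->
  hi <= hi' -> Lw c j lo' hi' P s = Lw c j lo hi P s.
Proof.
move=> hs h1 h2 h3.
have er : forall b : nat, Lw c j lo (hi + b%:Z) P s = Lw c j lo hi P s.
  elim=> [|b IH]; first by rewrite addr0.
  rewrite (_ : hi + b.+1%:Z = hi + b%:Z + 1); last by lia.
  rewrite Lw_step_r ?IH //; first by lia.
  by apply: hs; apply/orP; right; lia.
have el : forall a : nat, Lw c j (lo - a%:Z) hi' P s = Lw c j lo hi' P s.
  elim=> [|a IH]; first by rewrite subr0.
  rewrite (_ : lo - a.+1%:Z = lo - a%:Z - 1); last by lia.
  rewrite Lw_step_l ?IH //; first by lia.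
  by apply: hs; apply/orP; left; lia.
rewrite (_ : lo' = lo - (absz (lo - lo'))%:Z); last by lia.
rewrite el (_ : hi' = hi + (absz (hi' - hi))%:Z); last by lia.
by rewrite er.
Qed.


Definition Ent (n m : 'I_r -> int) (t : nat) (i : int) : F :=
  \sum_(j < r | (Sbefore n m j <= t < Sbefore n m j + dsz n m j)%N)
       c ((- m j + (t - Sbefore n m j)%N%:Z) - i) j.

Lemma Tmat_Ent n m t col : Tmat c n m t col = Ent n m t (- vabs m + col%:Z).
Proof. by rewrite mxE. Qed.

Lemma Sb_lt n m (j1 j2 : 'I_r) : (j1 < j2)%N ->
  (Sbefore n m j1 + dsz n m j1 <= Sbefore n m j2)%N.
Proof.
move=> hj; rewrite /Sbefore [X in (_ <= X)%N](bigD1 j1) //= addnC leq_add2l.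
rewrite [X in (X <= _)%N]big_mkcond [X in (_ <= X)%N]big_mkcond.
apply: leq_sum => l _; case: ifP => hl //; rewrite ifT //.
apply/andP; split; first exact: ltn_trans hl hj.
by apply/eqP=> e; move: hl; rewrite e ltnn.
Qed.

Lemma Sb_top n m (j : 'I_r) : (Sbefore n m j + dsz n m j <= Tsize n m)%N.
Proof.
rewrite /Tsize [X in (_ <= X)%N](bigD1 j) //= /Sbefore addnC leq_add2l.
rewrite [X in (X <= _)%N]big_mkcond [X in (_ <= X)%N]big_mkcond.
apply: leq_sum => l _; case: ifP => hl //; rewrite ifT //.
by apply/eqP=> e; move: hl; rewrite e ltnn.
Qed.

Lemma Ent_block n m (j : 'I_r) (t : nat) :
  (Sbefore n m j <= t < Sbefore n m j + dsz n m j)%N -> forall i,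
  Ent n m t i = c ((- m j + (t - Sbefore n m j)%N%:Z) - i) j.
Proof.
move=> ht i; rewrite /Ent (big_pred1 j) // => l /=.
apply/idP/eqP => [hl|->//]; apply/val_inj => /=.
case: (ltngtP l j) => // hlj.
- have := Sb_lt n m _ _ hlj; move: hl ht => /andP[_ ?] /andP[? _]; lia.
- have := Sb_lt n m _ _ hlj; move: hl ht => /andP[? _] /andP[_ ?]; lia.
Qed.

Lemma dsz_int (n m : 'I_r -> int) (H : inC2r n m) (j : 'I_r) : (dsz n m j)%:Z = n j + m j.
Proof. have := H j; rewrite /dsz; lia. Qed.
Arguments dsz_int {n m}.

Lemma rowE (n m : 'I_r -> int) (H : inC2r n m) (t : nat) :
  (forall i, Ent n m t i = 0) \/
  exists j s, (- m j <= s <= n j - 1) /\ forall i, Ent n m t i = c (s - i) j.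
Proof.
case: (pickP (fun j : 'I_r => (Sbefore n m j <= t < Sbefore n m j + dsz n m j)%N)) => [j Pj|P0].
- right; exists j, (- m j + (t - Sbefore n m j)%N%:Z); split; last exact: Ent_block.
  have := dsz_int H j; move: Pj => /andP[h1 h2]; lia.
- by left=> i; rewrite /Ent big_pred0.
Qed.
Arguments rowE {n m}.

Lemma condE (n m : 'I_r -> int) (H : inC2r n m) (j : 'I_r) (s : int) : - m j <= s <= n j - 1 ->
  exists t : 'I_(Tsize n m), forall i, Ent n m t i = c (s - i) j.
Proof.
move=> hs; have hd := dsz_int H j.
have hlt : (Sbefore n m j + absz (s + m j)%R < Tsize n m)%N.
  apply: leq_trans (Sb_top n m j); move: hs hd => /andP[? ?]; lia.
exists (Ordinal hlt) => i /=; rewrite (@Ent_block n m j).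
  congr (c _ j); rewrite addKn; move: hs => /andP[? ?]; lia.
move: hs hd => /andP[? ?]; lia.
Qed.
Arguments condE {n m}.

Lemma Tsize_int (n m : 'I_r -> int) (H : inC2r n m) : (Tsize n m)%:Z = vabs n + vabs m.
Proof.
rewrite /Tsize /vabs -big_split /= (big_morph Posz PoszD (erefl _)).
by apply: eq_bigr => j _; rewrite dsz_int.
Qed.
Arguments Tsize_int {n m}.

Lemma det00 N (A : 'M[F]_N) : N = 0%N -> \det A = 1.
Proof. by move: A => /[swap] ->; apply: det_mx00. Qed.

Lemma vabs_diag (n m : 'I_r -> int) : diag_idx n m -> vabs n + vabs m = 0.
Proof.
move=> /forallP hd; rewrite /vabs -big_split /= big1 // => j _.
exact/eqP/hd.
Qed.

Lemma det_neq0 (n m : 'I_r -> int) (H : inC2r n m) : normal c n m -> \det (Tmat c n m) != 0.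
Proof.
rewrite /normal; case: ifP => // hd _; rewrite det00 ?oner_neq0 //.
have := Tsize_int H; rewrite vabs_diag //; lia.
Qed.
Arguments det_neq0 {n m}.

Lemma core_uniq (n m : 'I_r -> int) (H : inC2r n m) (Hn : normal c n m)
  (p : 'I_(Tsize n m) -> F) :
  (forall j s, - m j <= s <= n j - 1 ->
     \sum_(t < Tsize n m) p t * c (s - (- vabs m + t%:Z)) j = 0) ->
  forall t, p t = 0.
Proof.
move=> hc.
have hu : Tmat c n m \in unitmx by rewrite unitmxE unitfE det_neq0.
set v : 'cV[F]_(Tsize n m) := \col_t p t.
have hv : Tmat c n m *m v = 0.
  apply/matrixP => t z; rewrite [in RHS]mxE mxE.
  under eq_bigr do rewrite Tmat_Ent mxE.
  case: (rowE H t) => [h0 | [j [s [hs he]]]].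
    by apply: big1 => col _; rewrite h0 mul0r.
  apply: etrans (hc j s hs); apply: eq_bigr => col _; by rewrite he mulrC.
have v0 : v = 0 by rewrite -(mulKmx hu v) hv mulmx0.
by move=> t; move/matrixP: v0 => /(_ t ord0); rewrite !mxE.
Qed.

Lemma core_exist (n m : 'I_r -> int) (H : inC2r n m) (Hn : normal c n m) (b : int) :
  exists p : 'I_(Tsize n m) -> F, forall j s, - m j <= s <= n j - 1 ->
     \sum_(t < Tsize n m) p t * c (s - (- vabs m + t%:Z)) j + c (s - b) j = 0.
Proof.
have hu : Tmat c n m \in unitmx by rewrite unitmxE unitfE det_neq0.
set w : 'cV[F]_(Tsize n m) := \col_t (- Ent n m t b).
set v := invmx (Tmat c n m) *m w.
exists (fun t => v t ord0) => j s hs.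
have [t0 ht0] := condE H j s hs.
have e : (Tmat c n m *m v) t0 ord0 = - Ent n m t0 b by rewrite mulKVmx // mxE.
have e2 : \sum_(t < Tsize n m) v t ord0 * c (s - (- vabs m + t%:Z)) j = - c (s - b) j.
  rewrite -ht0 -e mxE; apply: eq_bigr => t _; by rewrite Tmat_Ent ht0 mulrC.
by rewrite e2 addNr.
Qed.

Lemma core_normal (n m : 'I_r -> int) (H : inC2r n m) :
  (forall p : 'I_(Tsize n m) -> F,
    (forall j s, - m j <= s <= n j - 1 ->
       \sum_(t < Tsize n m) p t * c (s - (- vabs m + t%:Z)) j = 0) ->
    forall t, p t = 0) -> normal c n m.
Proof.
rewrite /normal; case: ifP => // _ hp.
rewrite -unitfE -unitmxE -unitmx_tr -row_free_unit -kermx_eq0.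
apply/eqP/row_matrixP => i; rewrite row0.
set u := row i _.
have hu : u *m (Tmat c n m)^T = 0.
  by apply/eqP; rewrite -sub_kermx row_sub.
suff u0 : u = 0 by exact: u0.
apply/rowP => t; rewrite [RHS]mxE.
apply: (hp (fun t => u ord0 t)) => j s hs.
have [t0 ht0] := condE H j s hs.
move/rowP: hu => /(_ t0); rewrite !mxE => hu.
apply: etrans hu; apply: eq_bigr => l _.
by rewrite [(_^T) _ _]mxE Tmat_Ent ht0.
Qed.

Definition pext D (p : 'I_D -> F) (k : int) : F :=
  if k < 0 then 0 else odflt 0 (omap p (insub (absz k))).

Arguments pext {D}.

Lemma pext_in D (p : 'I_D -> F) (t : 'I_D) : pext p t%:Z = p t.
Proof. by rewrite /pext /= valK. Qed.

Lemma pext_out D (p : 'I_D -> F) (k : int) : (k < 0) || (D%:Z <= k) -> pext p k = 0.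
Proof.
rewrite /pext; case: ifP => // hk /= hD; rewrite insubF //.
apply/negbTE; rewrite -leqNgt; lia.
Qed.

Lemma Lw_splitr (n m : 'I_r -> int) (H : inC2r n m) j (X : int -> F) s :
  Lw c j (- vabs m) (vabs n) X s =
  \sum_(t < Tsize n m) X (- vabs m + t%:Z) * c (s - (- vabs m + t%:Z)) j
  + X (vabs n) * c (s - vabs n) j.
Proof.
have hT := Tsize_int H.
rewrite /Lw (_ : absz (vabs n - - vabs m)%R = Tsize n m); last by lia.
rewrite big_ord_recr /=.
by have -> : - vabs m + (Tsize n m)%:Z = vabs n by lia.
Qed.

Lemma Lw_splitl (n m : 'I_r -> int) (H : inC2r n m) j (X : int -> F) s :
  Lw c j (- vabs m) (vabs n) X s =
  X (- vabs m) * c (s - - vabs m) j +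
  \sum_(t < Tsize n m) X (- vabs m + 1 + t%:Z) * c (s - (- vabs m + 1 + t%:Z)) j.
Proof.
have hT := Tsize_int H.
rewrite /Lw (_ : absz (vabs n - - vabs m)%R = Tsize n m); last by lia.
rewrite big_ord_recl /= addr0; congr (_ + _); apply: eq_bigr => t _.
by have -> : - vabs m + (bump 0 t)%:Z = - vabs m + 1 + t%:Z by rewrite /bump /=; lia.
Qed.


Arguments Lw_splitr {n m}.
Arguments Lw_splitl {n m}.
Arguments core_uniq {n m}.
Arguments core_exist {n m}.
Arguments core_normal {n m}.

Lemma PhiP (n m : 'I_r -> int) (H : inC2r n m) (Hn : normal c n m) :
  is_Phi c n m (Phi c n m).
Proof.
rewrite /Phi; case: ifP => hd.
  have hv := vabs_diag n m hd; split.
  - move=> i hi; rewrite /monom; case: eqP => // ei; move: hi; rewrite ei; lia.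
  - by rewrite /monom eqxx.
  - move=> j s; move/forallP: hd => /(_ j) /eqP; lia.
apply: epsilon_spec.
have [p hp] := core_exist H Hn (vabs n).
have hT := Tsize_int H.
exists (fun i => (i == vabs n)%:R + pext p (i + vabs m)); split.
- move=> i hi; rewrite pext_out; last by lia.
  by rewrite addr0 (_ : (i == vabs n) = false) //; apply/negbTE; lia.
- by rewrite eqxx pext_out ?addr0 //; lia.
- move=> j s hs; rewrite (Lw_splitr H) -[RHS](hp j s hs) eqxx.
  rewrite pext_out; last by lia.
  rewrite addr0 mul1r; congr (_ + _); apply: eq_bigr => t _.
  have -> : (- vabs m + t%:Z == vabs n) = false.
    by apply/negbTE; have := ltn_ord t; lia.
  by rewrite add0r (_ : - vabs m + t%:Z + vabs m = t%:Z) ?pext_in //; ring.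
Qed.

Lemma PhistarP (n m : 'I_r -> int) (H : inC2r n m) (Hn : normal c n m) :
  is_Phistar c n m (Phistar c n m).
Proof.
rewrite /Phistar; case: ifP => hd.
  have hv := vabs_diag n m hd; split.
  - move=> i hi; rewrite /monom; case: eqP => // ei; move: hi; rewrite ei; lia.
  - by rewrite /monom (_ : - vabs m = vabs n) ?eqxx //; lia.
  - move=> j s; move/forallP: hd => /(_ j) /eqP; lia.
apply: epsilon_spec.
have [p hp] := core_exist H Hn (- vabs m - 1).
have hT := Tsize_int H.
exists (fun i => (i == - vabs m)%:R + pext p (i + vabs m - 1)); split.
- move=> i hi; rewrite pext_out; last by lia.
  by rewrite addr0 (_ : (i == - vabs m) = false) //; apply/negbTE; lia.
- by rewrite eqxx pext_out ?addr0 //; lia.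
- move=> j s hs; rewrite (Lw_splitl H) -[RHS](hp j (s - 1)); last by lia.
  rewrite eqxx pext_out; last by lia.
  rewrite addr0 mul1r addrC; congr (_ + _).
    apply: eq_bigr => t _.
    have -> : (- vabs m + 1 + t%:Z == - vabs m) = false by apply/negbTE; lia.
    rewrite add0r (_ : - vabs m + 1 + t%:Z + vabs m - 1 = t%:Z); last by ring.
    by rewrite pext_in; congr (_ * c _ j); ring.
  by congr (c _ j); ring.
Qed.

Lemma U_Phi (n m : 'I_r -> int) (H : inC2r n m) (Hn : normal c n m) (X : int -> F) :
  supp_in (- vabs m) (vabs n) X -> X (vabs n) = 0 ->
  (forall j s, - m j <= s <= n j - 1 -> Lw c j (- vabs m) (vabs n) X s = 0) ->
  forall i, X i = 0.
Proof.
move=> hs hN hc.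
have hp := core_uniq H Hn (fun t => X (- vabs m + t%:Z)).
have hT := Tsize_int H.
have {}hp : forall t : 'I_(Tsize n m), X (- vabs m + t%:Z) = 0.
  apply: hp => j s hjs; rewrite -[RHS](hc j s hjs) (Lw_splitr H) hN mul0r addr0 //.
move=> i; case: (boolP ((i < - vabs m) || (vabs n < i))) => hi; first exact: hs.
case: (eqVneq i (vabs n)) => [->//|hiN].
have ht : (absz (i + vabs m)%R < Tsize n m)%N by lia.
by have := hp (Ordinal ht); rewrite /= (_ : - vabs m + (absz (i + vabs m)%R)%:Z = i) //; lia.
Qed.

Lemma U_Phistar (n m : 'I_r -> int) (H : inC2r n m) (Hn : normal c n m) (X : int -> F) :
  supp_in (- vabs m) (vabs n) X -> X (- vabs m) = 0 ->
  (forall j s, - m j + 1 <= s <= n j -> Lw c j (- vabs m) (vabs n) X s = 0) ->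
  forall i, X i = 0.
Proof.
move=> hs hM hc.
have hp := core_uniq H Hn (fun t => X (- vabs m + 1 + t%:Z)).
have hT := Tsize_int H.
have {}hp : forall t : 'I_(Tsize n m), X (- vabs m + 1 + t%:Z) = 0.
  apply: hp => j s hjs; rewrite -[RHS](hc j (s + 1)); last by lia.
  rewrite (Lw_splitl H) hM mul0r add0r; apply: eq_bigr => t _.
  by congr (_ * c _ j); ring.
move=> i; case: (boolP ((i < - vabs m) || (vabs n < i))) => hi; first exact: hs.
case: (eqVneq i (- vabs m)) => [->//|hiM].
have ht : (absz (i + vabs m - 1)%R < Tsize n m)%N by lia.
by have := hp (Ordinal ht); rewrite /= (_ : - vabs m + 1 + (absz (i + vabs m - 1)%R)%:Z = i) //; lia.
Qed.


Arguments PhiP {n m}.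
Arguments PhistarP {n m}.
Arguments U_Phi {n m}.
Arguments U_Phistar {n m}.

Lemma vabs_shift (v : 'I_r -> int) (k : 'I_r) : vabs (vshift v k) = vabs v + 1.
Proof.
rewrite /vabs /vshift big_split /=; congr (_ + _).
rewrite (bigD1 k) //= eqxx big1 ?addr0 // => j /negbTE ->; done.
Qed.

Lemma main_gen (n m : 'I_r -> int) (k : 'I_r) :
  inC2r n m -> inC2r (vshift n k) m -> inC2r n (vshift m k) ->
  normal c n m -> normal c (vshift n k) m -> normal c n (vshift m k) ->
  let ab := alpha c n (vshift m k) * beta c (vshift n k) m in
  [/\ Lw c k (- vabs m) (vabs n) (Phi c n m) (n k) != 0,
      Lw c k (- vabs (vshift m k)) (vabs n) (Phi c n (vshift m k)) (n k)
        / Lw c k (- vabs m) (vabs n) (Phi c n m) (n k) = 1 - ab,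
      Lw c k (- vabs m) (vabs n) (Phistar c n m) (- m k) != 0,
      Lw c k (- vabs m) (vabs (vshift n k)) (Phistar c (vshift n k) m) (- m k)
        / Lw c k (- vabs m) (vabs n) (Phistar c n m) (- m k) = 1 - ab
    & (ab != 1 <-> normal c (vshift n k) (vshift m k))].
Proof.
move=> H1 H2 H3 N1 N2 N3; cbv zeta.
have vn := vabs_shift n k; have vm := vabs_shift m k.
have H4 : inC2r (vshift n k) (vshift m k).
  by move=> j; have := H1 j; rewrite /vshift; case: (j == k); lia.
have hD : 0 <= vabs n + vabs m by rewrite -Tsize_int.
have Hk := H1 k.
have [As A1 Ac] := PhiP H3 N3; rewrite vm in As Ac.
have [Bs B1 Bc] := PhistarP H2 N2; rewrite vn in Bs B1 Bc.
have [Ps P1 Pc] := PhiP H1 N1.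
have [Ss S1 Sc] := PhistarP H1 N1.
have hal : alpha c n (vshift m k) = Phi c n (vshift m k) (- (vabs m + 1)) by rewrite /alpha vm.
have hbe : beta c (vshift n k) m = Phistar c (vshift n k) m (vabs n + 1) by rewrite /beta vn.
move: hal hbe.
set A := Phi c n (vshift m k) in As A1 Ac *; set B := Phistar c (vshift n k) m in Bs B1 Bc *.
set P := Phi c n m in Ps P1 Pc *; set S := Phistar c n m in Ss S1 Sc *.
set al := alpha c n (vshift m k); set be := beta c (vshift n k) m.
move=> hal hbe.
have eB : forall j s', Lw c j (- (vabs m + 1)) (vabs n) (fun i => B (i + 1)) s'
    = Lw c j (- vabs m) (vabs n + 1) B (s' + 1).
  by move=> j s'; rewrite Lw_shift (_ : - (vabs m + 1) + 1 = - vabs m) //; ring.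
have eA : forall j s', Lw c j (- vabs m) (vabs n + 1) (fun i => A (i - 1)) s'
    = Lw c j (- (vabs m + 1)) (vabs n) A (s' - 1).
  move=> j s'; have := Lw_shift j (- (vabs m + 1)) (vabs n) (fun i => A (i - 1)) (s' - 1).
  rewrite (_ : - (vabs m + 1) + 1 = - vabs m); last by ring.
  rewrite (_ : s' - 1 + 1 = s'); last by ring.
  by move=> <-; apply: Lw_eqf => i; rewrite addrK.
pose X1 := fun i => 1 * A i + (- al) * B (i + 1) + (- (1 - al * be)) * P i.
have X1s : supp_in (- vabs m) (vabs n) X1.
  move=> i hi; rewrite /X1.
  case: (eqVneq i (- (vabs m + 1))) => [->|ne].
    rewrite Ps; last by lia.
    rewrite (_ : - (vabs m + 1) + 1 = - vabs m); last by ring.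
    by rewrite B1 -hal; ring.
  rewrite As ?Bs ?Ps //; try lia; ring.
have I1 : forall i, X1 i = 0.
  apply: (U_Phi H1 N1) => //.
    by rewrite /X1 A1 P1 -hbe; ring.
  move=> j s hs; rewrite -(Lw_ext _ _ _ (- (vabs m + 1)) (vabs n) _ _ X1s); try lia.
  rewrite /X1 Lw_comb3 Ac; last by rewrite /vshift; case: (j == k); lia.
  rewrite eB Bc; last by rewrite /vshift; case: (j == k); lia.
  rewrite (Lw_ext _ (- vabs m) (vabs n)) // ?Pc //; try lia.
  ring.
have LA : Lw c k (- (vabs m + 1)) (vabs n) A (n k) =
          (1 - al * be) * Lw c k (- vabs m) (vabs n) P (n k).
  rewrite (Lw_eqf _ _ _ _ (fun i => (1 - al * be) * P i + al * B (i + 1) + 0 * P i)); last first.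
    move=> i; apply/eqP; rewrite -subr_eq0; apply/eqP; rewrite -[RHS](I1 i) /X1; ring.
  rewrite (Lw_comb3 _ _ _ P (fun i => B (i + 1)) P) eB Bc; last by rewrite /vshift eqxx; lia.
  rewrite (Lw_ext _ (- vabs m) (vabs n)) //; try lia.
  ring.
have LP0 : Lw c k (- vabs m) (vabs n) P (n k) != 0.
  apply/eqP => h0.
  suff h : P (vabs n) = 0 by move/eqP: h; rewrite P1 oner_eq0.
  apply: (U_Phi H2 N2); rewrite ?vn.
  - move=> i hi; apply: Ps; lia.
  - apply: Ps; lia.
  - move=> j s hs; rewrite (Lw_ext _ (- vabs m) (vabs n)) //; try lia.
    case: (eqVneq j k) hs => [->|ne] hs.
      rewrite /vshift eqxx in hs.
      case: (eqVneq s (n k)) => [->//|ns]; apply: Pc; lia.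
    by apply: Pc; move: hs; rewrite /vshift (negbTE ne); lia.

pose X2 := fun i => 1 * B i + (- be) * A (i - 1) + (- (1 - al * be)) * S i.
have X2s : supp_in (- vabs m) (vabs n) X2.
  move=> i hi; rewrite /X2.
  case: (eqVneq i (vabs n + 1)) => [->|ne].
    rewrite Ss; last by lia.
    rewrite (_ : vabs n + 1 - 1 = vabs n); last by ring.
    by rewrite A1 -hbe; ring.
  rewrite Bs ?As ?Ss //; try lia; ring.
have I2 : forall i, X2 i = 0.
  apply: (U_Phistar H1 N1) => //.
    rewrite /X2 B1 S1 (_ : - vabs m - 1 = - (vabs m + 1)); last by ring.
    by rewrite -hal; ring.
  move=> j s hs; rewrite -(Lw_ext _ _ _ (- vabs m) (vabs n + 1) _ _ X2s); try lia.
  rewrite /X2 (Lw_comb3 _ _ _ B (fun i => A (i - 1)) S) Bc; last by rewrite /vshift; case: (j == k); lia.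
  rewrite eA Ac; last by rewrite /vshift; case: (j == k); lia.
  rewrite (Lw_ext _ (- vabs m) (vabs n)) // ?Sc //; try lia.
  ring.
have LB : Lw c k (- vabs m) (vabs n + 1) B (- m k) =
          (1 - al * be) * Lw c k (- vabs m) (vabs n) S (- m k).
  rewrite (Lw_eqf _ _ _ _ (fun i => (1 - al * be) * S i + be * A (i - 1) + 0 * S i)); last first.
    move=> i; apply/eqP; rewrite -subr_eq0; apply/eqP; rewrite -[RHS](I2 i) /X2; ring.
  rewrite (Lw_comb3 _ _ _ S (fun i => A (i - 1)) S) eA Ac; last by rewrite /vshift eqxx; lia.
  rewrite (Lw_ext _ (- vabs m) (vabs n)) //; try lia.
  ring.
have LS0 : Lw c k (- vabs m) (vabs n) S (- m k) != 0.
  apply/eqP => h0.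
  suff h : S (- vabs m) = 0 by move/eqP: h; rewrite S1 oner_eq0.
  apply: (U_Phistar H3 N3); rewrite ?vm.
  - move=> i hi; apply: Ss; lia.
  - apply: Ss; lia.
  - move=> j s hs; rewrite (Lw_ext _ (- vabs m) (vabs n)) //; try lia.
    case: (eqVneq j k) hs => [->|ne] hs.
      rewrite /vshift eqxx in hs.
      case: (eqVneq s (- m k)) => [->//|ns]; apply: Sc; lia.
    by apply: Sc; move: hs; rewrite /vshift (negbTE ne); lia.
split => //.
- by rewrite vm LA mulfK.
- by rewrite vn LB mulfK.
split.
- move=> hab; apply: (core_normal H4) => p hp t.
  have hT := Tsize_int H4; rewrite vn vm in hT.
  pose X := fun i => pext p (i + (vabs m + 1)).
  have Xs : supp_in (- (vabs m + 1)) (vabs n) X.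
    by move=> i hi; rewrite /X pext_out //; lia.
  have hX : forall j s, Lw c j (- (vabs m + 1)) (vabs n) X s =
      \sum_(t < Tsize (vshift n k) (vshift m k)) p t * c (s - (- vabs (vshift m k) + t%:Z)) j.
    move=> j s; rewrite -(Lw_ext _ _ _ (- (vabs m + 1)) (vabs n + 1) _ _ Xs); try lia.
    rewrite -vm -vn (Lw_splitr H4) vn vm {2}/X pext_out; last by lia.
    rewrite mul0r addr0; apply: eq_bigr => l _; rewrite /X.
    by rewrite (_ : - (vabs m + 1) + l%:Z + (vabs m + 1) = l%:Z) ?pext_in //; ring.
  pose Y := fun i => 1 * X i + (- X (vabs n)) * A i + 0 * A i.
  have Y0 : forall i, Y i = 0.
    apply: (U_Phi H3 N3); rewrite ?vm.
    - move=> i hi; rewrite /Y Xs ?As //; ring.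
    - by rewrite /Y A1; ring.
    - move=> j s hs; rewrite /Y (Lw_comb3 _ _ _ X A A) hX hp ?Ac //; try ring.
      by move: hs; rewrite /vshift; case: (j == k); lia.
  have XN : X (vabs n) = 0.
    have hk : - vshift m k k <= n k <= vshift n k k - 1 by rewrite /vshift eqxx; lia.
    have := hp k (n k) hk; rewrite -hX.
    rewrite (Lw_eqf _ _ _ _ (fun i => X (vabs n) * A i + 0 * A i + 0 * A i)); last first.
      by move=> i; apply/eqP; rewrite -subr_eq0; apply/eqP; rewrite -[RHS](Y0 i) /Y; ring.
    rewrite (Lw_comb3 _ _ _ A A A) LA => h.
    have : X (vabs n) * ((1 - al * be) * Lw c k (- vabs m) (vabs n) P (n k)) = 0.
      rewrite -[RHS]h. by rewrite !mul0r !addr0.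
    move/eqP; rewrite !mulf_eq0 subr_eq0. rewrite [1 == _]eq_sym (negbTE hab) (negbTE LP0) orbF orbF => /eqP //.
  have := Y0 (- (vabs m + 1) + t%:Z); rewrite /Y XN /X.
  rewrite (_ : - (vabs m + 1) + t%:Z + (vabs m + 1) = t%:Z) ?pext_in; last by ring.
  by move=> <-; ring.
- move=> N4; apply/negP => /eqP hab1.
  suff h : A (vabs n) = 0 by move/eqP: h; rewrite A1 oner_eq0.
  apply: (U_Phi H4 N4); rewrite ?vm ?vn.
  - move=> i hi; apply: As; lia.
  - apply: As; lia.
  - move=> j s hs; rewrite (Lw_ext _ (- (vabs m + 1)) (vabs n)) //; try lia.
    case: (eqVneq j k) hs => [->|ne] hs.
      rewrite /vshift eqxx in hs.
      case: (eqVneq s (n k)) => [->|ns]; first by rewrite LA hab1 subrr mul0r.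
      apply: Ac; rewrite /vshift eqxx; lia.
    by apply: Ac; move: hs; rewrite /vshift (negbTE ne); lia.
Qed.

End Helpers.

Theorem corollary7p2 (R : realType) (r : nat) (hr : (0 < r)%N)
  (c : int -> 'I_r -> R[i]) (n m : 'I_r -> int) (k : 'I_r) :
  inC2r n m -> inC2r (vshift n k) m -> inC2r n (vshift m k) ->
  normal c n m -> normal c (vshift n k) m -> normal c n (vshift m k) ->
  let ab := alpha c n (vshift m k) * beta c (vshift n k) m in
  [/\ Lw c k (- vabs m) (vabs n) (Phi c n m) (n k) != 0,
      Lw c k (- vabs (vshift m k)) (vabs n) (Phi c n (vshift m k)) (n k)
        / Lw c k (- vabs m) (vabs n) (Phi c n m) (n k) = 1 - ab,
      Lw c k (- vabs m) (vabs n) (Phistar c n m) (- m k) != 0,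
      Lw c k (- vabs m) (vabs (vshift n k)) (Phistar c (vshift n k) m) (- m k)
        / Lw c k (- vabs m) (vabs n) (Phistar c n m) (- m k) = 1 - ab
    & (ab != 1 <-> normal c (vshift n k) (vshift m k))].
Proof. exact: (@main_gen R[i] r c n m k). Qed.
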